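(* Let $(\gamma_n)$ be a sequence of positive reals satisfying conditions (C1)–(C7) below, and let $f\in\mathcal{L}$. Then the sequence $\beta_n^f(t)$ converges to a constant function $L$, and the sequence \[ \nu_n^f(t)=\frac{\sum_{k=0}^n |K^k[f(t)]|^2}{\sum_{k=0}^n \frac{1}{\gamma_k}} \] converges to the constant function $L/2$, uniformly on every compact interval.
   Context: Given positive reals $\gamma_n$, set $\gamma_{-1}=1$, $p_{-1}=0$, $p_0=1$ and $\gamma_n p_{n+1}(\omega)=\omega p_n(\omega)-\gamma_{n-1}p_{n-1}(\omega)$ ($n\ge0$). Let $\Delta_n=\gamma_{n+1}-\gamma_n$, $\Delta^2_n=\Delta_{n+1}-\Delta_n$. Conditions: (C1) $\gamma_n\to\infty$; (C2) $\Delta_n\to0$; (C3) there exist $n_0,m_0$ with $\gamma_{n+m}>\gamma_n$ for all $n\ge n_0$, $m\ge m_0$; (C4) $\sum 1/\gamma_j=\infty$; (C5) some $\kappa>1$ has $\sum\gamma_j^{-\kappa}<\infty$; (C6) $\sum|\Delta_n|/\gamma_n^2<\infty$; (C7) $\sum|\Delta^2_n|/\gamma_n<\infty$. $C^\infty_{\mathbb{R}\to\mathbb{C}}$ is the set of functions $\mathbb{R}\to\mathbb{C}$ with infinitely differentiable real and imaginary parts. $K^n_t=(-i)^n p_n\!\left(i\frac{d}{dt}\right)$ (index $t$ may be omitted). $\beta_n^f(t)=\gamma_n(|K^n[f(t)]|^2+|K^{n+1}[f(t)]|^2)$, and $\mathcal{L}$ is the set of $f\in C^\infty_{\mathbb{R}\to\mathbb{C}}$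 for which $\beta_n^f(t)$ converges uniformly on every compact interval. *)

(* Defs.v *)
From Stdlib Require Import Reals.
From Coquelicot Require Import Coquelicot.
Open Scope R_scope.

(* gamma_{n-1}, with the convention gamma_{-1} = 1 *)
Definition gam_prev (g : nat -> R) (n : nat) : R :=
  match n with O => 1 | S m => g m end.

Definition shift_coef (c : nat -> R) (k : nat) : R :=
  match k with O => 0 | S j => c j end.

(* pp g n = (coefficients of p_{n-1}, coefficients of p_n), where
   coefficient k is the coefficient of omega^k; p_{-1}=0, p_0=1 and
   gamma_n p_{n+1} = omega p_n - gamma_{n-1} p_{n-1}. *)
Fixpoint pp (g : nat -> R) (n : nat) : (nat -> R) * (nat -> R) :=
  match n with
  | O => (fun _ => 0, fun k => match k with O => 1 | S _ => 0 end)
  | S m => let (a, b) := pp g m in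
           (b, fun k => (shift_coef b k - gam_prev g m * a k) / g m)
  end.

Definition pcoef (g : nat -> R) (n k : nat) : R := snd (pp g n) k.

Fixpoint Csum (F : nat -> C) (n : nat) : C :=
  match n with O => F O | S m => Cplus (Csum F m) (F (S m)) end.
Fixpoint Rsum (F : nat -> R) (n : nat) : R :=
  match n with O => F O | S m => Rsum F m + F (S m) end.

Definition smoothC (f : R -> C) : Prop :=
  forall (k : nat) (t : R),
    ex_derive_n (fun s => fst (f s)) k t /\ ex_derive_n (fun s => snd (f s)) k t.

Definition DnC (f : R -> C) (k : nat) (t : R) : C :=
  (Derive_n (fun s => fst (f s)) k t, Derive_n (fun s => snd (f s)) k t).

(* K^n[f](t) = (-i)^n p_n(i d/dt) f (t); p_n has degree <= n *)
Definition Kop (g : nat -> R) (n : nat) (f : R -> C) (t : R) : C :=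
  Cmult (Cpow (Copp Ci) n)
    (Csum (fun k => Cmult (RtoC (pcoef g n k)) (Cmult (Cpow Ci k) (DnC f k t))) n).

Definition beta (g : nat -> R) (f : R -> C) (n : nat) (t : R) : R :=
  g n * (Cmod (Kop g n f t) ^ 2 + Cmod (Kop g (S n) f t) ^ 2).

Definition nu (g : nat -> R) (f : R -> C) (n : nat) (t : R) : R :=
  Rsum (fun k => Cmod (Kop g k f t) ^ 2) n / Rsum (fun k => / g k) n.

Definition unif_cv_compact (u : nat -> R -> R) (l : R -> R) : Prop :=
  forall a b eps : R, 0 < eps ->
    exists N : nat, forall n : nat, (N <= n)%nat ->
      forall t : R, a <= t <= b -> Rabs (u n t - l t) < eps.

Definition in_L (g : nat -> R) (f : R -> C) : Prop :=
  smoothC f /\ exists l : R -> R, unif_cv_compact (beta g f) l.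

Definition Delta (g : nat -> R) (n : nat) : R := g (S n) - g n.
Definition Delta2 (g : nat -> R) (n : nat) : R := Delta g (S n) - Delta g n.

Definition conditions (g : nat -> R) : Prop :=
  (forall n, 0 < g n) /\
  (* C1 *) is_lim_seq g p_infty /\
  is_lim_seq (Delta g) 0 /\
  (exists n0 m0 : nat, forall n m : nat, (n0 <= n)%nat -> (m0 <= m)%nat ->
              g n < g (n + m)%nat) /\
  (* C4 *) is_lim_seq (Rsum (fun j => / g j)) p_infty /\
  (exists kappa : R, 1 < kappa /\ ex_series (fun j => / Rpower (g j) kappa)) /\
  ex_series (fun n => Rabs (Delta g n) / (g n) ^ 2) /\
  ex_series (fun n => Rabs (Delta2 g n) / g n).

(* Main.v *)
Require Import Defs.
From Stdlib Require Import Reals Lra Lia.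
From Coquelicot Require Import Coquelicot.
Open Scope R_scope.


Lemma der_lin2 (X Y : R -> R) t X' Y' A B :
  is_derive X t X' -> is_derive Y t Y' ->
  is_derive (fun s => A * X s + B * Y s) t (A * X' + B * Y').
Proof.
  intros HX HY.
  apply (is_derive_plus (fun s => A * X s) (fun s => B * Y s)).
  - now apply is_derive_scal.
  - now apply is_derive_scal.
Qed.

Lemma der_sq2 (X Y : R -> R) t X' Y' :
  is_derive X t X' -> is_derive Y t Y' ->
  is_derive (fun s => X s ^ 2 + Y s ^ 2) t (2 * (X t * X' + Y t * Y')).
Proof.
  intros HX HY.
  apply is_derive_ext with (f := fun s => X s * X s + Y s * Y s).
  { intros; simpl; ring. }
  replace (2 * (X t * X' + Y t * Y')) with
    ((X' * X t + X t * X') + (Y' * Y t + Y t * Y')) by ring.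
  apply (is_derive_plus (fun s => X s * X s) (fun s => Y s * Y s)).
  - apply (is_derive_mult X X); auto. intros; apply Rmult_comm.
  - apply (is_derive_mult Y Y); auto. intros; apply Rmult_comm.
Qed.

Definition Cder (F : R -> C) (t : R) (D : C) : Prop :=
  is_derive (fun s => fst (F s)) t (fst D) /\ is_derive (fun s => snd (F s)) t (snd D).

Lemma Cder_plus F G t DF DG : Cder F t DF -> Cder G t DG ->
  Cder (fun s => Cplus (F s) (G s)) t (Cplus DF DG).
Proof.
  intros [H1 H2] [H3 H4]; split; simpl.
  - apply (is_derive_plus (fun s => fst (F s)) (fun s => fst (G s))); auto.
  - apply (is_derive_plus (fun s => snd (F s)) (fun s => snd (G s))); auto.
Qed.

Lemma Cder_cmul (z : C) F t D : Cder F t D -> Cder (fun s => Cmult z (F s)) t (Cmult z D).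
Proof.
  destruct z as [p q]; intros [H1 H2]; split; simpl.
  - apply is_derive_ext with (f := fun s => p * fst (F s) + (- q) * snd (F s)).
    { intros; simpl; ring. }
    replace (p * fst D - q * snd D) with (p * fst D + (- q) * snd D) by ring.
    now apply der_lin2.
  - apply is_derive_ext with (f := fun s => p * snd (F s) + q * fst (F s)).
    { intros; simpl; ring. }
    now apply der_lin2.
Qed.

Definition Pf (f : R -> C) (c : nat -> R) (m : nat) (t : R) : C :=
  Csum (fun k => Cmult (RtoC (c k)) (Cmult (Cpow Ci k) (DnC f k t))) m.
Definition Qf (f : R -> C) (c : nat -> R) (m : nat) (t : R) : C :=
  Csum (fun k => Cmult (RtoC (c k)) (Cmult (Cpow Ci k) (DnC f (S k) t))) m.

Lemma Cder_DnC f k t : smoothC f -> Cder (DnC f k) t (DnC f (S k) t).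
Proof.
  intros Hf; destruct (Hf (S k) t) as [H1 H2]; split; simpl;
  now apply Derive_correct.
Qed.

Lemma Cder_Pf f c m t : smoothC f -> Cder (Pf f c m) t (Qf f c m t).
Proof.
  intros Hf; induction m as [|m IH]; unfold Pf, Qf; simpl.
  - apply Cder_cmul, Cder_cmul, Cder_DnC; auto.
  - apply (Cder_plus (fun s => Csum _ m) (fun s => _)); [exact IH|].
    apply Cder_cmul, Cder_cmul, Cder_DnC; auto.
Qed.

Lemma Csum_ext F G m : (forall k, (k <= m)%nat -> F k = G k) -> Csum F m = Csum G m.
Proof.
  induction m; intros H; simpl. apply H; lia.
  rewrite IHm by (intros; apply H; lia). rewrite H by lia. reflexivity.
Qed.

Lemma iQf f c m t : Cmult Ci (Qf f c m t) = Pf f (shift_coef c) (S m) t.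
Proof.
  induction m as [|m IH]; unfold Pf, Qf in *; simpl.
  - simpl. ring.
  - simpl in IH. rewrite <- IH. simpl. ring.
Qed.

Lemma Pf_lin f a b al be m t :
  Pf f (fun k => al * a k + be * b k) m t =
  Cplus (Cmult (RtoC al) (Pf f a m t)) (Cmult (RtoC be) (Pf f b m t)).
Proof.
  induction m as [|m IH]; unfold Pf in *; simpl.
  - apply injective_projections; simpl; ring.
  - rewrite IH. apply injective_projections; simpl; ring.
Qed.

Lemma Pf_ext f c m m' t : (m <= m')%nat -> (forall k, (m < k)%nat -> c k = 0) ->
  Pf f c m' t = Pf f c m t.
Proof.
  intros Hm Hc; induction Hm as [|m' Hm IH]; auto.
  unfold Pf in *; simpl. rewrite IH, Hc by lia. ring.
Qed.

Lemma pp_deg g n : (forall k, (n < k)%nat -> snd (pp g n) k = 0) /\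
                   (forall k, (n <= k)%nat -> fst (pp g n) k = 0).
Proof.
  induction n as [|n [IH1 IH2]]; simpl.
  - split; intros [|k] Hk; auto; lia.
  - destruct (pp g n) as [a b]; simpl in *; split; intros k Hk.
    + destruct k as [|k]; [lia|]. simpl. rewrite IH1, IH2 by lia. unfold Rdiv; ring.
    + apply IH1; lia.
Qed.

Lemma Pf_fext f c d m t : (forall k, c k = d k) -> Pf f c m t = Pf f d m t.
Proof. intros H; unfold Pf; apply Csum_ext; intros; now rewrite H. Qed.

Definition uu g f n t := Pf f (pcoef g n) n t.
Definition vv g f n t := Pf f (fst (pp g n)) n t.

Lemma vv0 g f t : vv g f 0 t = RtoC 0.
Proof. unfold vv, Pf; simpl. apply injective_projections; simpl; ring. Qed.

Lemma vvS g f n t : vv g f (S n) t = uu g f n t.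
Proof.
  unfold vv, uu, pcoef. simpl. destruct (pp_deg g n) as [H1 _].
  destruct (pp g n) as [a b] eqn:E; simpl in *.
  apply Pf_ext; auto.
Qed.

Lemma uu_rec g f n t : g n <> 0 ->
  Cmult (RtoC (g n)) (uu g f (S n) t) =
  Cminus (Pf f (shift_coef (pcoef g n)) (S n) t) (Cmult (RtoC (gam_prev g n)) (vv g f n t)).
Proof.
  intros Hg. unfold uu, vv, pcoef. destruct (pp_deg g n) as [_ H2]. simpl.
  destruct (pp g n) as [a b] eqn:E; simpl in *.
  change (shift_coef (fun k => b k)) with (shift_coef b).
  rewrite <- (Pf_ext f a n (S n)) by (auto; intros; apply H2; lia).
  rewrite (Pf_fext f (fun k => (shift_coef b k - gam_prev g n * a k) / g n) (fun k => (/ g n) * shift_coef b k + (- (gam_prev g n / g n)) * a k))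
    by (intros k; field; exact Hg).
  rewrite Pf_lin.
  generalize (Pf f (shift_coef b) (S n) t) (Pf f a (S n) t). intros [x1 x2] [y1 y2].
  apply injective_projections; simpl; field; auto.
Qed.

Lemma uu_der g f n t : g n <> 0 -> smoothC f ->
  Cder (uu g f n) t (Cmult (Copp Ci) (Cplus (Cmult (RtoC (g n)) (uu g f (S n) t))
                                            (Cmult (RtoC (gam_prev g n)) (vv g f n t)))).
Proof.
  intros Hg Hf.
  replace (Cplus _ _) with (Cmult Ci (Qf f (pcoef g n) n t)).
  - replace (Cmult (Copp Ci) (Cmult Ci _)) with (Qf f (pcoef g n) n t).
    + apply Cder_Pf; auto.
    + generalize (Qf f (pcoef g n) n t); intros [x y].
      apply injective_projections; simpl; ring.
  - rewrite uu_rec by auto. rewrite iQf.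
    generalize (Pf f (shift_coef (pcoef g n)) (S n) t) (vv g f n t). intros [x1 x2] [y1 y2].
    apply injective_projections; simpl; ring.
Qed.

Lemma Cmod_sq z : Cmod z ^ 2 = fst z ^ 2 + snd z ^ 2.
Proof.
  unfold Cmod. rewrite pow2_sqrt; auto. nra.
Qed.

Lemma Kop_sq g f n t : Cmod (Kop g n f t) ^ 2 = fst (uu g f n t) ^ 2 + snd (uu g f n t) ^ 2.
Proof.
  unfold Kop. rewrite Cmod_mult, Cmod_pow.
  replace (Cmod (Copp Ci)) with 1.
  - rewrite pow1, Rmult_1_l. apply Cmod_sq.
  - unfold Cmod; simpl. replace ((-0) * ((-0) * 1) + (-(1)) * ((-(1)) * 1)) with 1 by ring.
    now rewrite sqrt_1.
Qed.

Definition ww g f n t :=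
  fst (uu g f n t) * snd (uu g f (S n) t) - snd (uu g f n t) * fst (uu g f (S n) t).

Lemma der_val (F : R -> R) x l l' : is_derive F x l -> l = l' -> is_derive F x l'.
Proof. intros H <-; exact H. Qed.

Lemma sq_der g f n t : (forall k, 0 < g k) -> smoothC f ->
  is_derive (fun s => Cmod (Kop g n f s) ^ 2) t
    (2 * (g n * ww g f n t - gam_prev g n *
       (match n with O => 0 | S m => ww g f m t end))).
Proof.
  intros Hg Hf.
  apply is_derive_ext with (f := fun s => fst (uu g f n s) ^ 2 + snd (uu g f n s) ^ 2).
  { intros; now rewrite Kop_sq. }
  destruct (uu_der g f n t) as [H1 H2]; auto. { apply Rgt_not_eq, Hg. }
  replace (2 * _) with (2 * (fst (uu g f n t) *
      fst (Cmult (Copp Ci) (Cplus (Cmult (RtoC (g n)) (uu g f (S n) t))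
                                            (Cmult (RtoC (gam_prev g n)) (vv g f n t)))) +
     snd (uu g f n t) * snd (Cmult (Copp Ci) (Cplus (Cmult (RtoC (g n)) (uu g f (S n) t))
                                            (Cmult (RtoC (gam_prev g n)) (vv g f n t)))))).
  - now apply der_sq2.
  - destruct n as [|m].
    + rewrite vv0. unfold ww. simpl. ring.
    + rewrite vvS. unfold ww. simpl. ring.
Qed.

Lemma S_der g f n t : (forall k, 0 < g k) -> smoothC f ->
  is_derive (fun s => Rsum (fun k => Cmod (Kop g k f s) ^ 2) n) t (2 * g n * ww g f n t).
Proof.
  intros Hg Hf. induction n as [|n IH]; simpl.
  - eapply der_val; [apply (sq_der g f 0 t Hg Hf)|]. simpl. ring.
  - eapply der_val.
    + apply (is_derive_plus (fun s => Rsum (fun k => Cmod (Kop g k f s) ^ 2) n)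
                            (fun s => Cmod (Kop g (S n) f s) ^ 2)); [exact IH|].
      apply sq_der; auto.
    + simpl. unfold plus; simpl. ring.
Qed.

Lemma cont_of_der (F : R -> R) : (forall t, exists l, is_derive F t l) ->
  forall t, continuity_pt F t.
Proof.
  intros H t. apply continuity_pt_filterlim.
  assert (Hex : ex_derive F t) by (destruct (H t) as [l Hl]; now exists l).
  exact (ex_derive_continuous F t Hex).
Qed.

Lemma bdd_compact (F : R -> R) a b : (forall t, continuity_pt F t) ->
  exists B, forall t, a <= t <= b -> F t <= B.
Proof.
  intros HF. destruct (Rle_dec a b) as [Hab|Hab].
  - destruct (continuity_ab_maj F a b Hab (fun c _ => HF c)) as [x [Hx _]].
    now exists (F x).
  - exists 0. intros; lra.
Qed.

Lemma sq_nonneg g f n t : 0 <= Cmod (Kop g n f t) ^ 2.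
Proof. apply pow2_ge_0. Qed.

Lemma beta_nonneg g f n t : (forall k, 0 < g k) -> 0 <= beta g f n t.
Proof.
  intros Hg. unfold beta. apply Rmult_le_pos. now apply Rlt_le.
  pose proof (sq_nonneg g f n t); pose proof (sq_nonneg g f (S n) t); lra.
Qed.

Lemma sq_cont g f n : (forall k, 0 < g k) -> smoothC f ->
  forall t, continuity_pt (fun s => Cmod (Kop g n f s) ^ 2) t.
Proof.
  intros Hg Hf. apply cont_of_der. intros t. eexists. apply sq_der; auto.
Qed.

Lemma beta_cont g f n : (forall k, 0 < g k) -> smoothC f ->
  forall t, continuity_pt (beta g f n) t.
Proof.
  intros Hg Hf t. unfold beta.
  apply continuity_pt_mult. apply continuity_pt_const. intros x y; reflexivity.
  apply continuity_pt_plus; apply sq_cont; auto.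
Qed.

Lemma Rsum_cont (F : nat -> R -> R) n : (forall k t, continuity_pt (F k) t) ->
  forall t, continuity_pt (fun s => Rsum (fun k => F k s) n) t.
Proof.
  intros H; induction n; intros t; simpl.
  - apply H.
  - apply continuity_pt_plus; auto.
Qed.

Lemma S_der_bound g f n t : (forall k, 0 < g k) ->
  Rabs (2 * g n * ww g f n t) <= beta g f n t.
Proof.
  intros Hg. unfold beta, ww. rewrite !Kop_sq.
  set (x1 := fst (uu g f n t)). set (y1 := snd (uu g f n t)).
  set (x2 := fst (uu g f (S n) t)). set (y2 := snd (uu g f (S n) t)).
  specialize (Hg n).
  assert (Hw : Rabs (x1 * y2 - y1 * x2) * 2 <= x1 ^ 2 + y1 ^ 2 + (x2 ^ 2 + y2 ^ 2)).
  { pose proof (pow2_ge_0 (x1 - y2)); pose proof (pow2_ge_0 (y1 + x2));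
    pose proof (pow2_ge_0 (x1 + y2)); pose proof (pow2_ge_0 (y1 - x2));
    unfold Rabs; destruct Rcase_abs; nra. }
  rewrite Rabs_mult, Rabs_mult, (Rabs_pos_eq 2), (Rabs_pos_eq (g n)) by lra.
  nra.
Qed.

Lemma sum_identity g f n t : (forall k, 0 < g k) ->
  2 * Rsum (fun k => Cmod (Kop g k f t) ^ 2) n =
  Rsum (fun k => beta g f k t / g k) n + Cmod (Kop g 0 f t) ^ 2 - Cmod (Kop g (S n) f t) ^ 2.
Proof.
  intros Hg. induction n; cbn [Rsum]; unfold beta in *.
  - field. apply Rgt_not_eq, Hg.
  - rewrite Rmult_plus_distr_l, IHn. field. apply Rgt_not_eq, Hg.
Qed.

Lemma Rsum_pos F n : (forall k, 0 < F k) -> 0 < Rsum F n.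
Proof. intros H; induction n; simpl; auto. specialize (H (S n)); lra. Qed.

Lemma Rsum_le F G n : (forall k, F k <= G k) -> Rsum F n <= Rsum G n.
Proof. intros H; induction n; simpl; auto. specialize (H (S n)); lra. Qed.

Lemma Rsum_abs F n : Rabs (Rsum F n) <= Rsum (fun k => Rabs (F k)) n.
Proof.
  induction n; simpl. lra. eapply Rle_trans. apply Rabs_triang. lra.
Qed.

Lemma cesaro_bound (e : nat -> R) (g : nat -> R) N eps : (forall k, 0 < g k) -> 0 <= eps ->
  (forall k, (N < k)%nat -> Rabs (e k) <= eps) ->
  forall n, (N <= n)%nat ->
  Rabs (Rsum (fun k => e k / g k) n) <=
    Rsum (fun k => Rabs (e k) / g k) N + eps * Rsum (fun k => / g k) n.
Proof.
  intros Hg He Hk n Hn. induction Hn as [|m Hm IH].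
  - assert (0 <= eps * Rsum (fun k => / g k) N).
    { apply Rmult_le_pos; auto. apply Rlt_le, Rsum_pos. intros; apply Rinv_0_lt_compat, Hg. }
    eapply Rle_trans. apply Rsum_abs.
    assert (Rsum (fun k => Rabs (e k / g k)) N <= Rsum (fun k => Rabs (e k) / g k) N).
    { apply Rsum_le. intros k. unfold Rdiv. rewrite Rabs_mult, Rabs_inv, (Rabs_pos_eq (g k)).
      lra. apply Rlt_le, Hg. }
    lra.
  - cbn [Rsum]. eapply Rle_trans. apply Rabs_triang.
    assert (Rabs (e (S m) / g (S m)) <= eps * / g (S m)).
    { unfold Rdiv. rewrite Rabs_mult, Rabs_inv, (Rabs_pos_eq (g (S m))) by (apply Rlt_le, Hg).
      apply Rmult_le_compat_r. apply Rlt_le, Rinv_0_lt_compat, Hg. apply Hk. lia. }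
    lra.
Qed.

Lemma lim_inf_ev u : is_lim_seq u p_infty -> forall K, exists N, forall n, (N <= n)%nat -> K < u n.
Proof.
  intros H K. apply is_lim_seq_spec in H. destruct (H K) as [N HN]. now exists N.
Qed.

Lemma Rsum_lin (A B : nat -> R) c n :
  Rsum (fun k => A k + c * B k) n = Rsum A n + c * Rsum B n.
Proof. induction n; cbn [Rsum]; [ring|]. rewrite IHn; ring. Qed.

Lemma Rsum_ext (A B : nat -> R) n : (forall k, A k = B k) -> Rsum A n = Rsum B n.
Proof. intros H; induction n; cbn [Rsum]; rewrite ?IHn; now rewrite H. Qed.

Section Main.
Variables (g : nat -> R) (f : R -> C) (l : R -> R).
Hypothesis Hg : forall k, 0 < g k.
Hypothesis Hf : smoothC f.
Hypothesis Hl : unif_cv_compact (beta g f) l.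
Hypothesis HC1 : is_lim_seq g p_infty.
Hypothesis HC4 : is_lim_seq (Rsum (fun j => / g j)) p_infty.

Definition HH n := Rsum (fun j => / g j) n.

Lemma HH_pos n : 0 < HH n.
Proof. apply Rsum_pos. intros; apply Rinv_0_lt_compat, Hg. Qed.

Lemma beta_bound a b : exists N0 M, 0 <= M /\
  (forall n, (N0 <= n)%nat -> forall t, a <= t <= b -> beta g f n t <= M) /\
  (forall t, a <= t <= b -> Rabs (l t) <= M).
Proof.
  destruct (Hl a b 1 Rlt_0_1) as [N0 HN0].
  destruct (bdd_compact (beta g f N0) a b (beta_cont g f N0 Hg Hf)) as [B0 HB0].
  exists N0, (Rabs B0 + 2). split. pose proof (Rabs_pos B0); lra. split.
  - intros n Hn t Ht. pose proof (HN0 N0 (le_n _) t Ht). specialize (HN0 n Hn t Ht).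
    specialize (HB0 t Ht). pose proof (Rle_abs B0).
    apply Rabs_lt_between in HN0. apply Rabs_lt_between in H. lra.
  - intros t Ht. pose proof (HN0 N0 (le_n _) t Ht) as H.
    specialize (HB0 t Ht). pose proof (Rle_abs B0). pose proof (beta_nonneg g f N0 t Hg).
    apply Rabs_lt_between in H. pose proof (Rabs_pos B0). apply Rabs_le; split; lra.
Qed.

Lemma nu_conv a b eps : 0 < eps -> exists N, forall n, (N <= n)%nat ->
  forall t, a <= t <= b -> Rabs (nu g f n t - l t / 2) < eps.
Proof.
  intros Heps.
  destruct (beta_bound a b) as [N0 [M [HM [HbM HlM]]]].
  destruct (Hl a b (eps / 2)) as [N1' HN1']; [lra|].
  set (N1 := max N0 N1').
  destruct (bdd_compact (fun t => Rsum (fun k => beta g f k t / g k) N1) a b) as [B1 HB1].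
  { apply (Rsum_cont (fun k t => beta g f k t / g k)). intros k t.
    unfold Rdiv. apply continuity_pt_mult. apply beta_cont; auto. apply continuity_pt_const.
    intros x y; reflexivity. }
  destruct (bdd_compact (fun t => Cmod (Kop g 0 f t) ^ 2) a b (sq_cont g f 0 Hg Hf)) as [B2 HB2].
  set (Cc := Rabs B1 + M * HH N1 + Rabs B2).
  destruct (lim_inf_ev _ HC4 (4 * (Cc + 1) / eps)) as [N2 HN2].
  destruct (lim_inf_ev _ HC1 (M + 1)) as [N3 HN3].
  exists (max N1 (max N2 N3)). intros n Hn t Ht.
  assert (HHn := HH_pos n).
  assert (H2 : 4 * (Cc + 1) / eps < HH n) by (apply HN2; lia).
  assert (H3 : M + 1 < g n) by (apply HN3; lia).
  set (num := Rsum (fun k => (beta g f k t - l t) / g k) n + Cmod (Kop g 0 f t) ^ 2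
              - Cmod (Kop g (S n) f t) ^ 2).
  assert (Hnu : nu g f n t - l t / 2 = num / (2 * HH n)).
  { unfold nu, num.
    rewrite (Rsum_ext (fun k => (beta g f k t - l t) / g k) (fun k => beta g f k t / g k + (- l t) * / g k))
      by (intros; field; apply Rgt_not_eq, Hg).
    rewrite Rsum_lin. fold (HH n).
    pose proof (sum_identity g f n t Hg) as HS.
    replace (Rsum (fun k => Cmod (Kop g k f t) ^ 2) n) with
      ((Rsum (fun k => beta g f k t / g k) n + Cmod (Kop g 0 f t) ^ 2 - Cmod (Kop g (S n) f t) ^ 2) / 2) by lra.
    field. lra. }
  rewrite Hnu.
  assert (HcB : Rabs (Rsum (fun k => (beta g f k t - l t) / g k) n) <=
     Rsum (fun k => Rabs (beta g f k t - l t) / g k) N1 + eps / 2 * HH n).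
  { apply (cesaro_bound (fun k => beta g f k t - l t) g N1 (eps / 2) Hg); [lra| |lia].
    intros k Hk. apply Rlt_le, HN1'; [lia|auto]. }
  assert (HfB : Rsum (fun k => Rabs (beta g f k t - l t) / g k) N1 <= Rabs B1 + M * HH N1).
  { eapply Rle_trans.
    - apply (Rsum_le _ (fun k => beta g f k t / g k + M * / g k)).
      intros k. pose proof (beta_nonneg g f k t Hg). specialize (HlM t Ht).
      assert (Rabs (beta g f k t - l t) <= beta g f k t + M).
      { eapply Rle_trans. apply Rabs_triang. rewrite Rabs_Ropp, Rabs_pos_eq; lra. }
      pose proof (Rinv_0_lt_compat _ (Hg k)). unfold Rdiv. nra.
    - rewrite Rsum_lin. fold (HH N1). specialize (HB1 t Ht). simpl in HB1.
      pose proof (Rle_abs B1). lra. }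
  assert (Hs0 : Cmod (Kop g 0 f t) ^ 2 <= Rabs B2).
  { specialize (HB2 t Ht). simpl in HB2. pose proof (Rle_abs B2). lra. }
  pose proof (sq_nonneg g f 0 t).
  assert (HsS : 0 <= Cmod (Kop g (S n) f t) ^ 2 <= 1).
  { split. apply sq_nonneg. assert (Hb := HbM n ltac:(lia) t Ht). unfold beta in Hb.
    pose proof (sq_nonneg g f n t). pose proof (sq_nonneg g f (S n) t). pose proof (Hg n). nra. }
  assert (HCc : 4 * (Cc + 1) < eps * HH n).
  { apply (Rmult_lt_compat_l eps) in H2; auto. replace (eps * (4 * (Cc + 1) / eps)) with (4 * (Cc + 1)) in H2 by (field; lra). lra. }
  assert (Hnum : Rabs num < eps * (2 * HH n)).
  { unfold num. eapply Rle_lt_trans. apply Rabs_triang. rewrite Rabs_Ropp.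
    eapply Rle_lt_trans. apply Rplus_le_compat_r. apply Rabs_triang.
    rewrite (Rabs_pos_eq (Cmod _ ^ 2)) by auto. rewrite (Rabs_pos_eq (Cmod (Kop g (S n) f t) ^ 2)) by lra.
    unfold Cc in HCc. replace (eps * (2 * HH n)) with (2 * (eps * HH n)) by ring.
    assert (eps / 2 * HH n = (eps * HH n) / 2) by field.
    pose proof (Rabs_pos B1); pose proof (Rabs_pos B2); pose proof (Rmult_le_pos _ _ HM (Rlt_le _ _ (HH_pos N1))). lra. }
  unfold Rdiv. rewrite Rabs_mult, Rabs_inv, (Rabs_pos_eq (2 * HH n)) by lra.
  apply (Rmult_lt_reg_r (2 * HH n)). lra. rewrite Rmult_assoc, Rinv_l by lra. lra.
Qed.
Lemma l_const s t : l s = l t.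
Proof.
  set (a := Rmin s t); set (b := Rmax s t).
  assert (Hsab : a <= s <= b) by (unfold a, b; split; [apply Rmin_l|apply Rmax_l]).
  assert (Htab : a <= t <= b) by (unfold a, b; split; [apply Rmin_r|apply Rmax_r]).
  destruct (beta_bound a b) as [N0 [M [HM [HbM _]]]].
  assert (HS : forall n, (N0 <= n)%nat ->
     Rabs (Rsum (fun k => Cmod (Kop g k f t) ^ 2) n - Rsum (fun k => Cmod (Kop g k f s) ^ 2) n)
       <= M * Rabs (t - s)).
  { intros n Hn.
    destruct (MVT_gen (fun x => Rsum (fun k => Cmod (Kop g k f x) ^ 2) n) s t
                (fun x => 2 * g n * ww g f n x)) as [c [Hc Heq]].
    - intros; apply S_der; auto.
    - intros; apply cont_of_der; intros; eexists; apply S_der; auto.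
    - cbv beta in Heq. rewrite Heq, Rabs_mult. apply Rmult_le_compat_r. apply Rabs_pos.
      eapply Rle_trans. apply S_der_bound; auto. apply HbM; auto. }
  apply cond_eq. intros eps Heps.
  destruct (nu_conv a b (eps / 8)) as [N HN]; [lra|].
  destruct (lim_inf_ev _ HC4 (8 * (M * Rabs (t - s) + 1) / eps)) as [N2 HN2].
  set (n := max N0 (max N N2)).
  assert (H1 := HN n ltac:(lia) s Hsab).
  assert (H2 := HN n ltac:(lia) t Htab).
  assert (H3 : 8 * (M * Rabs (t - s) + 1) / eps < HH n) by (apply HN2; lia).
  assert (HHn := HH_pos n).
  assert (H4 : 8 * (M * Rabs (t - s) + 1) < eps * HH n).
  { apply (Rmult_lt_compat_l eps) in H3; auto.
    replace (eps * (8 * (M * Rabs (t - s) + 1) / eps)) with (8 * (M * Rabs (t - s) + 1)) in H3 by (field; lra). lra. }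
  assert (H5 : Rabs (nu g f n t - nu g f n s) * HH n <= M * Rabs (t - s)).
  { replace (nu g f n t - nu g f n s) with
      ((Rsum (fun k => Cmod (Kop g k f t) ^ 2) n - Rsum (fun k => Cmod (Kop g k f s) ^ 2) n) / HH n)
      by (unfold nu; fold (HH n); field; lra).
    unfold Rdiv. rewrite Rabs_mult, Rabs_inv, (Rabs_pos_eq (HH n)) by lra.
    rewrite Rmult_assoc, Rinv_l, Rmult_1_r by lra. apply HS; lia. }
  assert (H6 : Rabs (nu g f n t - nu g f n s) < eps / 8).
  { pose proof (Rabs_pos (nu g f n t - nu g f n s)). pose proof (Rabs_pos (t - s)).
    pose proof (Rmult_le_pos _ _ HM (Rabs_pos (t - s))).
    apply (Rmult_lt_reg_r (HH n)); auto. lra. }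
  revert H1 H2 H6. unfold Rabs. repeat destruct Rcase_abs; lra.
Qed.
End Main.

Theorem lemma29 (g : nat -> R) (f : R -> C) :
  conditions g -> in_L g f ->
  exists L : R,
    unif_cv_compact (beta g f) (fun _ => L) /\
    unif_cv_compact (nu g f) (fun _ => L / 2).
Proof.
  intros [Hg [HC1 [_ [_ [HC4 _]]]]] [Hf [l Hl]].
  exists (l 0). split.
  - intros a b eps He. destruct (Hl a b eps He) as [N HN]. exists N. intros n Hn t Ht.
    rewrite (l_const g f l Hg Hf Hl HC1 HC4 0 t). now apply HN.
  - intros a b eps He. destruct (nu_conv g f l Hg Hf Hl HC1 HC4 a b eps He) as [N HN].
    exists N. intros n Hn t Ht.
    rewrite (l_const g f l Hg Hf Hl HC1 HC4 0 t). now apply HN.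
Qed.
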